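(* Let $h:\mathbb{A}\to\mathbb{A}$ be a monotone continuous function. Then there is a clopen interval $J\subseteq\mathbb{A}$ such that either $h\restriction J$ is constant or $h\restriction J$ is strictly monotone.
   Context: Let $\mathbb{A}_0=\,]0,1]\times\{0\}$, $\mathbb{A}_1=[0,1[\,\times\{1\}$ and $\mathbb{A}=\mathbb{A}_0\cup\mathbb{A}_1$, ordered lexicographically: $\langle a,r\rangle\prec\langle b,s\rangle$ iff $a<b$, or $a=b$ and $r<s$; $\mathbb{A}$ (the double arrow space) carries the order topology. A clopen interval is a nonempty convex subset of $\mathbb{A}$ that is clopen. A (partial) function $f:\mathbb{A}\to\mathbb{A}$ is monotone if it is non-decreasing or non-increasing, and strictly monotone if it is strictly increasing or strictly decreasing. *)

(* Defs.v *)
(* the double arrow space as a subtype of R * bool. *)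
From Stdlib Require Import Reals.
Open Scope R_scope.

(* <a, false> stands for <a,0>, <a, true> for <a,1>. *)
Definition in_DA (p : R * bool) : Prop :=
  if snd p then 0 <= fst p < 1 else 0 < fst p <= 1.

Definition DA : Type := { p : R * bool | in_DA p }.

Definition DApt (x : DA) : R * bool := proj1_sig x.

Definition DAlt (x y : DA) : Prop :=
  fst (DApt x) < fst (DApt y) \/
  (fst (DApt x) = fst (DApt y) /\ snd (DApt x) = false /\ snd (DApt y) = true).

Definition DAle (x y : DA) : Prop := DAlt x y \/ x = y.

(* Open "interval" with optional endpoints (None = unbounded); these are the
   basic open sets of the order topology: open rays, open intervals, whole space. *)
Definition open_int (lo hi : option DA) (y : DA) : Prop :=
  match lo with Some a => DAlt a y | None => True end /\
  match hi with Some b => DAlt y b | None => True end.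

Definition DAopen (U : DA -> Prop) : Prop :=
  forall x, U x -> exists lo hi, open_int lo hi x /\
    (forall y, open_int lo hi y -> U y).

Definition DAclopen (U : DA -> Prop) : Prop :=
  DAopen U /\ DAopen (fun x => ~ U x).

Definition convex (J : DA -> Prop) : Prop :=
  forall x y z, J x -> J z -> DAle x y -> DAle y z -> J y.

Definition clopen_interval (J : DA -> Prop) : Prop :=
  (exists x, J x) /\ convex J /\ DAclopen J.

Definition DAcontinuous (h : DA -> DA) : Prop :=
  forall U, DAopen U -> DAopen (fun x => U (h x)).

Definition nondecreasing_on (J : DA -> Prop) (h : DA -> DA) : Prop :=
  forall x y, J x -> J y -> DAle x y -> DAle (h x) (h y).
Definition nonincreasing_on (J : DA -> Prop) (h : DA -> DA) : Prop :=
  forall x y, J x -> J y -> DAle x y -> DAle (h y) (h x).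
Definition strictly_increasing_on (J : DA -> Prop) (h : DA -> DA) : Prop :=
  forall x y, J x -> J y -> DAlt x y -> DAlt (h x) (h y).
Definition strictly_decreasing_on (J : DA -> Prop) (h : DA -> DA) : Prop :=
  forall x y, J x -> J y -> DAlt x y -> DAlt (h y) (h x).

Definition monotone_on J h := nondecreasing_on J h \/ nonincreasing_on J h.
Definition strictly_monotone_on J h :=
  strictly_increasing_on J h \/ strictly_decreasing_on J h.
Definition constant_on (J : DA -> Prop) (h : DA -> DA) : Prop :=
  forall x y, J x -> J y -> h x = h y.

(* Main.v *)
Require Import Defs.
From Stdlib Require Import Reals Lra ProofIrrelevance Classical.
Open Scope R_scope.

Lemma DA_eq (x y : DA) : fst (DApt x) = fst (DApt y) -> snd (DApt x) = snd (DApt y) -> x = y.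
Proof. destruct x as [[a r] Hx], y as [[b s] Hy]; unfold DApt; simpl; intros -> ->. f_equal; apply proof_irrelevance. Qed.

Lemma DA_bounds x : 0 <= fst (DApt x) <= 1 /\ (snd (DApt x) = false -> 0 < fst (DApt x)) /\ (snd (DApt x) = true -> fst (DApt x) < 1).
Proof. destruct x as [[a r] H]; unfold DApt, in_DA in *; simpl in *; destruct r; repeat split; intros; try discriminate; lra. Qed.

Lemma DAle_iff x y : DAle x y <-> fst (DApt x) < fst (DApt y) \/ (fst (DApt x) = fst (DApt y) /\ (snd (DApt x) = false \/ snd (DApt y) = true)).
Proof. unfold DAle, DAlt. split.
 - intros [[H|[H1 [H2 H3]]]|<-]; auto. right; split; auto; destruct (snd (DApt x)); auto.
 - intros [H|[H1 H2]]; [left;left;auto|].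
   destruct (snd (DApt x)) eqn:E1, (snd (DApt y)) eqn:E2.
   + right; apply DA_eq; [auto| rewrite E1,E2; auto].
   + destruct H2; discriminate.
   + left; right; auto.
   + right; apply DA_eq; [auto| rewrite E1,E2; auto].
Qed.

Ltac bnd x := pose proof (DA_bounds x).
Ltac crunch := unfold DAlt in *; repeat rewrite DAle_iff in *; unfold DApt in *; simpl in *;
  repeat match goal with | |- context [snd (proj1_sig ?x)] => destruct (snd (proj1_sig x))
   | H : context [snd (proj1_sig ?x)] |- _ => destruct (snd (proj1_sig x)) end; simpl in *;
  intuition (try discriminate; try lra).

Definition J_ab (a b : R) (z : DA) : Prop :=
  (a < fst (DApt z) \/ (a = fst (DApt z) /\ snd (DApt z) = true)) /\
  (fst (DApt z) < b \/ (fst (DApt z) = b /\ snd (DApt z) = false)).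

Lemma J_clopen a b : 0<a -> a<b -> b<1 -> clopen_interval (J_ab a b).
Proof. intros Ha Hab Hb. split; [|split].
 - assert (Hm: in_DA ((a+b)/2, true)) by (unfold in_DA; simpl; lra). exists (exist _ _ Hm).
   unfold J_ab, DApt; simpl; split; left; lra.
 - unfold convex, J_ab; intros x y z; bnd x; bnd y; bnd z; crunch.
 - assert (H0: in_DA (a,false)) by (unfold in_DA; simpl; lra). assert (H1: in_DA (b,true)) by (unfold in_DA; simpl; lra).
   assert (H2: in_DA (a,true)) by (unfold in_DA; simpl; lra). assert (H3: in_DA (b,false)) by (unfold in_DA; simpl; lra).
   split.
   + intros z Hz.
     exists (Some (exist _ _ H0)), (Some (exist _ _ H1)). unfold open_int, J_ab in *; unfold DAlt, DApt in *; simpl in *. split; [|intros y]; crunch.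
   + intros z Hz. unfold J_ab in Hz.
     destruct (classic (DAlt z (exist _ _ H2))) as [Hl|Hl].
     * exists None, (Some (exist _ _ H2)). unfold open_int, J_ab in *. split; [tauto|].
       intros y [_ Hy]. unfold DAlt, DApt in *; simpl in *. bnd y. crunch.
     * exists (Some (exist _ _ H3)), None. unfold open_int, J_ab in *. 
       assert (Hr: DAlt (exist _ _ H3) z).
       { unfold DAlt, DApt in *; simpl in *. bnd z. crunch. }
       split; [tauto|].
       intros y [Hy _]. unfold DAlt, DApt in *; simpl in *. bnd y. crunch.
Qed.

Lemma right_nbhd U y : DAopen U -> U y -> snd (DApt y) = true ->
  exists d, fst (DApt y) < d < 1 /\ forall z, J_ab (fst (DApt y)) d z -> U z.
Proof.
  intros HU Hy Hs. destruct (HU y Hy) as [lo [hi [[Hlo Hhi] Hall]]].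
  bnd y.
  assert (Hp: fst (DApt y) < 1) by (apply H; auto).
  destruct hi as [w|].
  - assert (Hw: fst (DApt y) < fst (DApt w)) by (bnd w; crunch).
    bnd w.
    exists ((fst (DApt y) + fst (DApt w))/2). split; [lra|].
    intros z Hz; apply Hall; split.
    + destruct lo as [v|]; [|trivial]. unfold J_ab in Hz. bnd v; bnd z. crunch.
    + unfold J_ab in Hz. bnd z. crunch.
  - exists ((fst (DApt y) + 1)/2). split; [lra|].
    intros z Hz; apply Hall; split.
    + destruct lo as [v|]; [|trivial]. unfold J_ab in Hz. bnd v; bnd z. crunch.
    + trivial.
Qed.

Lemma left_nbhd U x : DAopen U -> U x -> snd (DApt x) = false ->
  exists a, 0 < a < fst (DApt x) /\ forall z, J_ab a (fst (DApt x)) z -> U z.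
Proof.
  intros HU Hx Hs. destruct (HU x Hx) as [lo [hi [[Hlo Hhi] Hall]]].
  bnd x.
  assert (Hp: 0 < fst (DApt x)) by (apply H; auto).
  destruct lo as [w|].
  - assert (Hw: fst (DApt w) < fst (DApt x)) by (bnd w; crunch).
    bnd w.
    exists ((fst (DApt x) + fst (DApt w))/2). split; [lra|].
    intros z Hz; apply Hall; split.
    + unfold J_ab in Hz. bnd z. crunch.
    + destruct hi as [v|]; [|trivial]. unfold J_ab in Hz. bnd v; bnd z. crunch.
  - exists (fst (DApt x)/2). split; [lra|].
    intros z Hz; apply Hall; split.
    + trivial.
    + destruct hi as [v|]; [|trivial]. unfold J_ab in Hz. bnd v; bnd z. crunch.
Qed.

Lemma DAle_antisym x y : DAle x y -> DAle y x -> x = y.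
Proof. intros [H1|H1] [H2|H2]; auto. exfalso. bnd x; bnd y. crunch. Qed.

Lemma DAle_trans x y z : DAle x y -> DAle y z -> DAle x z.
Proof. intros. bnd x; bnd y; bnd z. crunch. Qed.

Lemma DAle_refl x : DAle x x.
Proof. right; auto. Qed.

Lemma open_le p : snd (DApt p) = false -> DAopen (fun z => DAle z p).
Proof.
  intros Hs z Hz. bnd p.
  destruct (Rlt_or_le (fst (DApt p)) 1) as [Hl|Hl].
  - assert (Hq: in_DA (fst (DApt p), true)) by (unfold in_DA; simpl; lra).
    exists None, (Some (exist _ _ Hq)). split.
    + split; [trivial|]. bnd z; crunch.
    + intros w [_ Hw]. bnd w; crunch.
  - exists None, None. split; [split; trivial|]. intros w _. bnd w; crunch.
Qed.

Lemma open_ge p : snd (DApt p) = true -> DAopen (fun z => DAle p z).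
Proof.
  intros Hs z Hz. bnd p.
  destruct (Rlt_or_le 0 (fst (DApt p))) as [Hl|Hl].
  - assert (Hq: in_DA (fst (DApt p), false)) by (unfold in_DA; simpl; lra).
    exists (Some (exist _ _ Hq)), None. split.
    + split; [|trivial]. bnd z; crunch.
    + intros w [Hw _]. bnd w; crunch.
  - exists None, None. split; [split; trivial|]. intros w _. bnd w; crunch.
Qed.

Theorem proposition2p2 (h : DA -> DA) :
  monotone_on (fun _ => True) h -> DAcontinuous h ->
  exists J : DA -> Prop, clopen_interval J /\
    (constant_on J h \/ strictly_monotone_on J h).
Proof.
  intros Hmon Hcont.
  assert (Hm: forall x y z, DAle x y -> DAle y z -> h x = h z -> h y = h x).
  { intros x y z H1 H2 H3. destruct Hmon as [H|H].
    - apply DAle_antisym. 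
      + rewrite H3. apply H; auto.
      + apply H; auto.
    - apply DAle_antisym.
      + apply H; auto.
      + rewrite H3. apply H; auto. }
  destruct (classic (exists x y, DAlt x y /\ h x = h y)) as [[x [y [Hxy Heq]]]|Hno].
  2:{ exists (fun _ => True). split.
      - assert (Hq: in_DA (1, false)) by (unfold in_DA; simpl; lra).
        split; [exists (exist _ _ Hq); trivial|]. split; [intros ? ? ? ? ? ? ?; trivial|].
        split.
        + intros z _. exists None, None. split; [split; trivial|]. intros; trivial.
        + intros z Hz. exfalso; apply Hz; trivial.
      - right. destruct Hmon as [H|H]; [left|right]; intros a b _ _ Hab;
          (destruct (H a b I I (or_introl Hab)) as [E|E]; [exact E|]);
          exfalso; apply Hno; exists a, b; split; auto. }
  bnd x; bnd y.
  destruct Hxy as [Hlt | [Hfe [Hsx Hsy]]].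
  - set (a := fst (DApt x) + (fst (DApt y) - fst (DApt x))/3).
    set (b := fst (DApt x) + 2*(fst (DApt y) - fst (DApt x))/3).
    exists (J_ab a b). split; [apply J_clopen; unfold a, b; lra|].
    left. intros z1 z2 Hz1 Hz2. unfold J_ab, a, b in *.
    rewrite (Hm x z1 y), (Hm x z2 y); auto; bnd z1; bnd z2; crunch.
  - assert (Hx0: 0 < fst (DApt x)) by (apply H; auto).
    assert (Hy1: fst (DApt y) < 1) by (apply H0; auto).
    destruct (snd (DApt (h x))) eqn:Ep.
    + pose proof (Hcont _ (open_ge _ Ep)) as HU.
      destruct Hmon as [Hmo|Hmo].
      * destruct (left_nbhd _ x HU (DAle_refl _) Hsx) as [a [Ha Hall]].
        exists (J_ab a (fst (DApt x))). split; [apply J_clopen; lra|].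
        left. assert (K: forall z, J_ab a (fst (DApt x)) z -> h z = h x).
        { intros z Hz. apply DAle_antisym; [|apply Hall; auto].
          apply Hmo; auto. unfold J_ab in Hz; bnd z; crunch. }
        intros z1 z2 H1 H2. rewrite (K z1 H1), (K z2 H2); auto.
      * destruct (right_nbhd _ y HU ltac:(simpl; rewrite Heq; apply DAle_refl) Hsy) as [d [Hd Hall]].
        exists (J_ab (fst (DApt y)) d). split; [apply J_clopen; lra|].
        left. assert (K: forall z, J_ab (fst (DApt y)) d z -> h z = h x).
        { intros z Hz. apply DAle_antisym; [|apply Hall; auto].
          rewrite Heq. apply Hmo; auto. unfold J_ab in Hz; bnd z; crunch. }
        intros z1 z2 H1 H2. rewrite (K z1 H1), (K z2 H2); auto.
    + pose proof (Hcont _ (open_le _ Ep)) as HU.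
      destruct Hmon as [Hmo|Hmo].
      * destruct (right_nbhd _ y HU ltac:(simpl; rewrite Heq; apply DAle_refl) Hsy) as [d [Hd Hall]].
        exists (J_ab (fst (DApt y)) d). split; [apply J_clopen; lra|].
        left. assert (K: forall z, J_ab (fst (DApt y)) d z -> h z = h x).
        { intros z Hz. apply DAle_antisym; [apply Hall; auto|].
          rewrite Heq. apply Hmo; auto. unfold J_ab in Hz; bnd z; crunch. }
        intros z1 z2 H1 H2. rewrite (K z1 H1), (K z2 H2); auto.
      * destruct (left_nbhd _ x HU (DAle_refl _) Hsx) as [a [Ha Hall]].
        exists (J_ab a (fst (DApt x))). split; [apply J_clopen; lra|].
        left. assert (K: forall z, J_ab a (fst (DApt x)) z -> h z = h x).
        { intros z Hz. apply DAle_antisym; [apply Hall; auto|].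
          apply Hmo; auto. unfold J_ab in Hz; bnd z; crunch. }
        intros z1 z2 H1 H2. rewrite (K z1 H1), (K z2 H2); auto.
Qed.
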